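(* Let $p_0=\mathcal{N}(\mu_0,\sigma^2)$ and $p_1=\mathcal{N}(\mu_1,\sigma^2)$ on the metric space $(\mathbb{R},|\cdot|)$ with $\mu_0<\mu_1$. Consider binary classification with labels $0,1$ equally likely, given $y=i$ the input $x\sim p_i$, classifiers indexed by closed sets $A\subseteq\mathbb{R}$ (output $1$ on $A$, $0$ on $A^c$), $0$-$1$ loss, and adversarial risk of $A$ given by $\mathbb{E}_{(x,y)}\big[\sup_{|x'-x|\le\epsilon}\mathbf{1}\{\mathbf{1}\{x'\in A\}\neq y\}\big]$; the optimal robust risk is the infimum of this over closed $A$. Then: (1) If $\epsilon\ge\frac{|\mu_0-\mu_1|}{2}$, the optimal robust risk is $1/2$, and a constant classifier achieves it. (2) If $\epsilon<\frac{|\mu_0-\mu_1|}{2}$, the set $A=\big[\frac{\mu_0+\mu_1}{2},+\infty\big)$ gives an optimal robust classifier, and the optimal robust risk equals $Q\!\left(\frac{\frac{\mu_1-\mu_0}{2}-\epsilon}{\sigma}\right)$.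
   Context: $Q(x)=1-\Phi(x)$, where $\Phi$ is the cdf of the standard normal distribution. *)

(* Defs.v *)
From HB Require Import structures.
From mathcomp Require Import all_boot all_order all_algebra.
From mathcomp Require Import all_classical all_reals all_analysis.
Set Implicit Arguments. Unset Strict Implicit. Unset Printing Implicit Defensive.
Import Order.TTheory GRing.Theory Num.Theory.
Import numFieldNormedType.Exports.
Local Open Scope classical_set_scope.
Local Open Scope ring_scope.

Definition Phi {R : realType} (x : R) : R :=
  fine (normal_prob 0 1 `]-oo, x]).
Definition Qfun {R : realType} (x : R) : R := 1 - Phi x.

(* Adversarial 0-1 loss of the classifier "1 on A, 0 on A^c" at (x, y),
   labels y : bool (false = 0, true = 1):
   sup_{|x'-x| <= eps} 1{ 1{x' \in A} <> y }. *)
Definition adv_loss {R : realType} (A : set R) (eps : R) (x : R) (y : bool)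
  : \bar R :=
  ereal_sup [set (((x' \in A) != y)%:R)%:E | x' in [set x' | `|x' - x| <= eps]].

Definition adv_risk {R : realType} (mu0 mu1 sigma eps : R) (A : set R) : \bar R :=
  ((1/2)%:E * \int[normal_prob mu0 sigma]_x adv_loss A eps x false
   + (1/2)%:E * \int[normal_prob mu1 sigma]_x adv_loss A eps x true)%E.

Definition opt_risk {R : realType} (mu0 mu1 sigma eps : R) : \bar R :=
  ereal_inf [set adv_risk mu0 mu1 sigma eps A | A in [set A : set R | closed A]].

(* Main.v *)
Require Import Defs.
From HB Require Import structures.
From mathcomp Require Import all_boot all_order all_algebra.
From mathcomp Require Import all_classical all_reals all_analysis.
From mathcomp Require Import ring lra.
Import measurable_realfun.
Set Implicit Arguments. Unset Strict Implicit. Unset Printing Implicit Defensive.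
Import Order.TTheory GRing.Theory Num.Theory.
Import numFieldNormedType.Exports.
Local Open Scope classical_set_scope.
Local Open Scope ring_scope.

Section S.
Context {R : realType}.
Local Notation mu := (@lebesgue_measure R).

Lemma lebesgue_measure_shift (t : R) (A : set R) : measurable A ->
  pushforward mu ((fun x => x + t) : R -> measurableTypeR R) A = mu A.
Proof.
move=> mA; apply/esym/lebesgue_measure_unique => //.
  exact: measurable_realfun.measurable_funD.
move=> ? _ [[a b]] _ <-.
change (mu `]a, b] = mu ((+%R^~ t) @^-1` `]a, b])).
have -> : (+%R^~ t) @^-1` `]a, b]%classic = `](a - t), (b - t)]%classic :> set R.
  by apply/seteqP; split => x /=; rewrite !in_itv /= ltrBlDr lerBrDr.
rewrite !lebesgue_measure_itv/= !lte_fin ltrD2r.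
by case: ifP => // _; rewrite -!EFinD; congr EFin; ring.
Qed.

Lemma normal_prob_shift (m s t : R) (V : set R) : s != 0 -> measurable V ->
  normal_prob m s ((+%R^~ t) @^-1` V) = normal_prob (m + t) s V.
Proof.
move=> s0 mV.
have mf : measurable_fun [set: measurableTypeR R] (+%R^~ t : measurableTypeR R -> measurableTypeR R).
  exact: measurable_realfun.measurable_funD.
pose pf := measure_function_pushforward__canonical__measure_function_Measure mu mf.
rewrite /normal_prob.
transitivity (\int[pf]_(y in V) (normal_pdf (m + t) s y)%:E)%E; last first.
  apply: eq_measure_integral => A mA _.
  by rewrite /pf /= lebesgue_measure_shift.
rewrite (ge0_integral_pushforward mf) //; last 2 first.
- by apply/measurable_EFinP; apply: measurable_funTS; exact: measurable_normal_pdf.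
- by move=> y _; rewrite lee_fin normal_pdf_ge0.
apply: eq_integral => x _ /=.
rewrite /normal_pdf (negbTE s0) /normal_fun.
by rewrite opprD addrACA subrr addr0.
Qed.

Lemma normal_prob_opp (s : R) (V : set R) : s != 0 -> measurable V ->
  normal_prob 0 s (-%R @^-1` V) = normal_prob 0 s V.
Proof.
move=> s0 mV.
have mf : measurable_fun [set: measurableTypeR R] (-%R : measurableTypeR R -> measurableTypeR R).
  exact: oppr_measurable.
pose pf := measure_function_pushforward__canonical__measure_function_Measure mu mf.
rewrite /normal_prob.
transitivity (\int[pf]_(y in V) (normal_pdf 0 s y)%:E)%E; last first.
  apply: eq_measure_integral => A mA _.
  by rewrite /pf /= lebesgue_measureN.
rewrite (ge0_integral_pushforward mf) //; last 2 first.
- by apply/measurable_EFinP; apply: measurable_funTS; exact: measurable_normal_pdf.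
- by move=> y _; rewrite lee_fin normal_pdf_ge0.
apply: eq_integral => x _ /=.
by rewrite /normal_pdf (negbTE s0) /normal_fun !subr0 sqrrN.
Qed.
Lemma dF (s : R) : (fun x : R => x * s)^`()%classic = cst s.
Proof.
apply/funext => x; rewrite derive1E deriveM// derive_cst derive_id.
by rewrite scaler0 add0r /=; exact: mulr1.
Qed.

Lemma normal_prob_scale (s b : R) : 0 < s ->
  normal_prob 0 s `]-oo, b * s] = normal_prob 0 1 `]-oo, b].
Proof.
move=> s0.
rewrite /normal_prob.
rewrite (@increasing_ge0_integration_by_substitutionNy _ (fun x => x * s)); last 8 first.
- by move=> x y _ _ xy; rewrite ltr_pM2r.
- by rewrite dF => x _; exact: cst_continuous.
- by rewrite dF; exact: is_cvg_cst.
- by rewrite dF; exact: cvg_cst.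
- split.
    by move=> x _; apply: derivableM.
  apply: cvg_at_left_filter; apply: cvgM; [exact: cvg_id | exact: cvg_cst].
- by apply: gt0_cvgMlNy => //; exact: cvg_id.
- apply: continuous_subspaceT; exact: continuous_normal_pdf (lt0r_neq0 s0).
- by move=> x _; exact: normal_pdf_ge0.
apply: eq_integral => x _; rewrite dF /=; congr EFin.
have sn0 : s != 0 by rewrite gt_eqF.
rewrite /normal_pdf (negbTE sn0) oner_eq0 /normal_fun !subr0.
have E : (x * s) ^+ 2 / (s ^+ 2 *+ 2) = x ^+ 2 / (1 ^+ 2 *+ 2).
  by field; rewrite ?expr1n ?pnatr_eq0 ?mulrn_eq0 ?expf_eq0 /= ?sn0 ?oner_eq0.
transitivity (normal_peak s * expR (- (x * s) ^+ 2 / (s ^+ 2 *+ 2)) * s).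
  by rewrite !fctE /= subr0.
rewrite !mulNr E mulrAC; congr (_ * _).
rewrite /normal_peak expr1n mul1r -!mulrnAr sqrtrM ?sqr_ge0 // sqrtr_sqr gtr0_norm //.
by rewrite invfM mulrC mulrA mulfV // mul1r.
Qed.
End S.

Section S3.
Context {R : realType}.

Lemma normal_prob_U1 (m s h : R) (A : set R) : measurable A ->
  normal_prob m s (A `|` [set h]) = normal_prob m s A.
Proof. by move=> mA; rewrite measureU0 //; exact: integral_set1. Qed.

Lemma itv_cy_U1 (h : R) : `[h, +oo[%classic = `]h, +oo[%classic `|` [set h].
Proof.
apply/seteqP; split => x /=; rewrite !in_itv /= !andbT.
  by rewrite le_eqVlt => /orP[/eqP ->|->]; [right|left].
by case=> [/ltW|->].
Qed.

Lemma itv_Nyc_U1 (h : R) : `]-oo, h]%classic = `]-oo, h[%classic `|` [set h].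
Proof.
apply/seteqP; split => x /=; rewrite !in_itv /=.
  by rewrite le_eqVlt => /orP[/eqP ->|->]; [right|left].
by case=> [/ltW|->].
Qed.

Lemma normal_prob_cy (s h : R) : 0 < s ->
  normal_prob 0 s `[h, +oo[ = (Qfun (h / s))%:E.
Proof.
move=> s0.
rewrite -[X in normal_prob _ _ X]setCK setCitvr probability_setC //.
transitivity (1 - normal_prob 0 s `]-oo, h[)%E; first by [].
have -> : normal_prob 0 s `]-oo, h[ = normal_prob 0 s `]-oo, h].
  by rewrite itv_Nyc_U1 normal_prob_U1.
rewrite -{1}(divfK (lt0r_neq0 s0) h) normal_prob_scale //.
rewrite /Qfun /Phi EFinB fineK // fin_num_measure //.
Qed.


Lemma normal_prob_oy (s h : R) : 0 < s ->
  normal_prob 0 s `]h, +oo[ = (Qfun (h / s))%:E.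
Proof. by move=> s0; rewrite -normal_prob_cy // itv_cy_U1 normal_prob_U1. Qed.

Lemma normal_prob_Nyc (s h : R) : 0 < s ->
  normal_prob 0 s `]-oo, - h] = (Qfun (h / s))%:E.
Proof.
move=> s0; rewrite -normal_prob_cy // -normal_prob_opp ?lt0r_neq0 //.
congr (normal_prob _ _ _).
by apply/seteqP; split => x /=; rewrite !in_itv /= ?andbT lerN2.
Qed.

Lemma normal_prob_Nyo (s h : R) : 0 < s ->
  normal_prob 0 s `]-oo, - h[ = (Qfun (h / s))%:E.
Proof. by move=> s0; rewrite -normal_prob_Nyc // itv_Nyc_U1 normal_prob_U1. Qed.

Lemma preim_shift (m : R) (P : R -> Prop) :
  (+%R^~ m) @^-1` [set x | P x] = [set x | P (x + m)].
Proof. by []. Qed.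

Lemma T1 (m s h : R) : 0 < s -> normal_prob m s `[m + h, +oo[ = (Qfun (h / s))%:E.
Proof.
move=> s0; rewrite -[m in normal_prob m]add0r -normal_prob_shift ?lt0r_neq0 //.
rewrite -normal_prob_cy //; congr (normal_prob _ _ _).
by apply/seteqP; split => x /=; rewrite !in_itv /= ?andbT (addrC x) lerD2l.
Qed.

Lemma T2 (m s h : R) : 0 < s -> normal_prob m s `]m + h, +oo[ = (Qfun (h / s))%:E.
Proof.
move=> s0; rewrite -[m in normal_prob m]add0r -normal_prob_shift ?lt0r_neq0 //.
rewrite -normal_prob_oy //; congr (normal_prob _ _ _).
by apply/seteqP; split => x /=; rewrite !in_itv /= ?andbT (addrC x) ltrD2l.
Qed.

Lemma T3 (m s h : R) : 0 < s -> normal_prob m s `]-oo, m - h] = (Qfun (h / s))%:E.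
Proof.
move=> s0; rewrite -[m in normal_prob m]add0r -normal_prob_shift ?lt0r_neq0 //.
rewrite -normal_prob_Nyc //; congr (normal_prob _ _ _).
by apply/seteqP; split => x /=; rewrite !in_itv /= (addrC x) lerD2l.
Qed.

Lemma T4 (m s h : R) : 0 < s -> normal_prob m s `]-oo, m - h[ = (Qfun (h / s))%:E.
Proof.
move=> s0; rewrite -[m in normal_prob m]add0r -normal_prob_shift ?lt0r_neq0 //.
rewrite -normal_prob_Nyo //; congr (normal_prob _ _ _).
by apply/seteqP; split => x /=; rewrite !in_itv /= (addrC x) ltrD2l.
Qed.
End S3.

Import HBNNSimple.
Lemma le_measure_integral d (T : measurableType d) (R : realType)
  (mu : {measure set T -> \bar R}) (W : set T) (f : T -> \bar R) :
  measurable W -> (forall x, (0 <= f x)%E) -> (forall x, W x -> (1 <= f x)%E) ->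
  (mu W <= \int[mu]_x f x)%E.
Proof.
move=> mW f0 f1; rewrite ge0_integralTE //.
apply: ereal_sup_ubound; exists (indic_nnsfun R mW).
  move=> x /=; rewrite /mindic indicE; case: (boolP (x \in W)) => [/set_mem/f1 //|_].
  by rewrite f0.
by rewrite sintegral_indic // setIT.
Qed.

Section AL.
Context {R : realType}.
Definition Sset (A : set R) (eps : R) := [set x : R | exists x', `|x' - x| <= eps /\ A x'].
Definition Tset (A : set R) (eps : R) := [set x : R | exists x', `|x' - x| <= eps /\ ~ A x'].

Lemma adv_loss_false (A : set R) eps x : 0 <= eps ->
  adv_loss A eps x false = (\1_(Sset A eps) x)%:E.
Proof.
move=> e0; rewrite /adv_loss indicE.
case: (pselect (Sset A eps x)) => [[x' [h1 h2]] | hn].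
- rewrite mem_set; last by exists x'.
  apply/eqP; rewrite eq_le; apply/andP; split.
    apply: ge_ereal_sup => _ [y hy <-]; rewrite lee_fin.
    by case: (y \in A).
  by apply: ereal_sup_ubound; exists x' => //; rewrite mem_set.
- rewrite memNset //.
  apply/eqP; rewrite eq_le; apply/andP; split.
    apply: ge_ereal_sup => _ [y hy <-]; rewrite lee_fin.
    by rewrite memNset //= => Ay; apply: hn; exists y.
  apply: ereal_sup_ubound; exists x => /=; first by rewrite subrr normr0.
  by rewrite memNset // => Ax; apply: hn; exists x; rewrite subrr normr0.
Qed.

Lemma adv_loss_true (A : set R) eps x : 0 <= eps ->
  adv_loss A eps x true = (\1_(Tset A eps) x)%:E.
Proof.
move=> e0; rewrite /adv_loss indicE.
case: (pselect (Tset A eps x)) => [[x' [h1 h2]] | hn].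
- rewrite mem_set; last by exists x'.
  apply/eqP; rewrite eq_le; apply/andP; split.
    apply: ge_ereal_sup => _ [y hy <-]; rewrite lee_fin.
    by case: (y \in A).
  by apply: ereal_sup_ubound; exists x' => //; rewrite memNset.
- rewrite memNset //.
  apply/eqP; rewrite eq_le; apply/andP; split.
    apply: ge_ereal_sup => _ [y hy <-]; rewrite lee_fin.
    case: (pselect (A y)) => Ay; first by rewrite mem_set.
    by exfalso; apply: hn; exists y.
  apply: ereal_sup_ubound; exists x => /=; first by rewrite subrr normr0.
  case: (pselect (A x)) => Ax; first by rewrite mem_set.
  by exfalso; apply: hn; exists x; rewrite subrr normr0.
Qed.

Lemma Tset_open (A : set R) eps : closed A -> open (Tset A eps).
Proof.
move=> cA; rewrite openE => x [x' [h1 h2]].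
have oA : open (~` A) by exact: closed_openC.
have : nbhs x' (~` A) by exact: oA.
move=> /nbhs_ballP [r r0 hr].
apply/nbhs_ballP; exists r => // y xy.
exists (x' + (y - x)); split.
  by rewrite (_ : x' + (y - x) - y = x' - x) //; ring.
apply: hr; rewrite /ball /= (_ : x' - (x' + (y - x)) = x - y) //; ring.
Qed.
End AL.

Section B.
Context {R : realType}.

Definition pr (m s : R) (V : set R) : R := fine (normal_prob m s V).

Lemma prE m s V : measurable V -> normal_prob m s V = (pr m s V)%:E.
Proof. by move=> mV; rewrite /pr fineK // fin_num_measure. Qed.

Lemma pr_split m s (X Y : set R) : measurable X -> measurable Y ->
  pr m s X = pr m s (X `&` Y) + pr m s (X `&` ~` Y).
Proof.
move=> mX mY.
have mXY := measurableI _ _ mX mY.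
have mXnY := measurableI _ _ mX (measurableC mY).
have h : normal_prob m s X = (normal_prob m s (X `&` Y) + normal_prob m s (X `&` ~` Y))%E.
  rewrite -[X in normal_prob _ _ X]setIT -(setUv Y) setIUr.
  by apply: measureU => //; rewrite setIACA setICr setI0.
by move: h; rewrite !prE // -EFinD => -[].
Qed.

Lemma pdf_le (a b s x : R) : a <= b -> s != 0 -> x <= (a + b) / 2 ->
  normal_pdf b s x <= normal_pdf a s x.
Proof.
move=> ab s0 xc; rewrite /normal_pdf (negbTE s0) /normal_fun.
apply: ler_wpM2l; first exact: normal_peak_ge0.
rewrite ler_expR; apply: ler_wpM2r.
  by rewrite invr_ge0 mulrn_wge0 // sqr_ge0.
rewrite lerN2; nra.
Qed.

Lemma pdf_le' (a b s x : R) : a <= b -> s != 0 -> (a + b) / 2 <= x ->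
  normal_pdf a s x <= normal_pdf b s x.
Proof.
move=> ab s0 xc; rewrite /normal_pdf (negbTE s0) /normal_fun.
apply: ler_wpM2l; first exact: normal_peak_ge0.
rewrite ler_expR; apply: ler_wpM2r.
  by rewrite invr_ge0 mulrn_wge0 // sqr_ge0.
rewrite lerN2; nra.
Qed.

Lemma np_le (g h s : R) (V : set R) : measurable V ->
  (forall x, V x -> normal_pdf g s x <= normal_pdf h s x) ->
  pr g s V <= pr h s V.
Proof.
move=> mV hle; rewrite -lee_fin -!prE //; rewrite /normal_prob.
apply: ge0_le_integral => //.
- by move=> x _; rewrite lee_fin normal_pdf_ge0.
- by apply/measurable_EFinP; apply: measurable_funTS; exact: measurable_normal_pdf.
- by apply/measurable_EFinP; apply: measurable_funTS; exact: measurable_normal_pdf.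
Qed.

Lemma add4_le (p q r t p' q' r' t' : R) : p <= p' -> q <= r' -> r <= q' -> t <= t' ->
  (p + q) + (r + t) <= (p' + q') + (r' + t').
Proof. lra. Qed.

Lemma bayes (a b s : R) (B : set R) : a <= b -> s != 0 -> measurable B ->
  pr a s `](a + b) / 2, +oo[ + pr b s (~` `](a + b) / 2, +oo[) <=
  pr a s B + pr b s (~` B).
Proof.
move=> ab s0 mB.
set c := (a + b) / 2.
set U := `]c, +oo[%classic.
have mU : measurable U by exact: measurable_itv.
have mnB := measurableC mB.
have mnU := measurableC mU.
rewrite (pr_split a s mB mU) (pr_split b s mnB mU).
rewrite (pr_split a s mU mB) (pr_split b s mnU mB).
apply: add4_le.
- by rewrite setIC.
- rewrite (setIC (~` B)); apply: np_le; first exact: measurableI.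
  move=> x [/= Ux _]; apply: pdf_le' => //.
  by move: Ux; rewrite /U /= in_itv /= andbT => /ltW.
- rewrite (setIC B); apply: np_le; first exact: measurableI.
  move=> x [/= Ux _]; apply: pdf_le => //.
  by move: Ux; rewrite /U /= in_itv /= andbT => /negP; rewrite -leNgt.
- by rewrite setIC.
Qed.
End B.

Section M.
Context {R : realType}.
Variables (mu0 mu1 sigma eps : R).
Hypotheses (hsigma : 0 < sigma) (heps : 0 <= eps).

Let s0 : sigma != 0. Proof. exact: lt0r_neq0. Qed.

Lemma opt_eq (v : \bar R) (A0 : set R) : closed A0 ->
  adv_risk mu0 mu1 sigma eps A0 = v ->
  (forall A, closed A -> (v <= adv_risk mu0 mu1 sigma eps A)%E) ->
  opt_risk mu0 mu1 sigma eps = v.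
Proof.
move=> cA0 hA0 hlb; apply/eqP; rewrite eq_le; apply/andP; split.
  by apply: ge_ereal_inf; exists v => //; exists A0.
by apply/ereal_infP => _ [A cA <-]; exact: hlb.
Qed.

Lemma risk_lb (A : set R) (t : R) : closed A -> 0 <= t -> t <= 2 * eps ->
  ((1/2 * pr (mu0 + t) sigma (~` Tset A eps) + 1/2 * pr mu1 sigma (Tset A eps))%:E
    <= adv_risk mu0 mu1 sigma eps A)%E.
Proof.
move=> cA t0 t2.
have mT : measurable (Tset A eps) by apply: open_measurable; exact: Tset_open.
have mnT := measurableC mT.
have mf : measurable_fun [set: R] (+%R^~ t : R -> R).
  exact: measurable_funD.
have mW : measurable ((+%R^~ t) @^-1` (~` Tset A eps)).
  by rewrite -[X in measurable X]setTI; apply: mf.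
rewrite EFinD !EFinM /adv_risk; apply: leeD; apply: lee_wpmul2l => //.
- rewrite -prE // -normal_prob_shift //.
  apply: le_measure_integral => //.
    by move=> x; rewrite adv_loss_false // lee_fin.
  move=> x /= Wx; rewrite adv_loss_false // indicE mem_set //.
  exists (x + t / 2); split.
    by rewrite addrC addKr ger0_norm ?divr_ge0 //; lra.
  apply: contrapT => nA; apply: Wx; exists (x + t / 2); split => //.
  rewrite opprD addrACA subrr add0r.
  have -> : t / 2 - t = - (t / 2) by rewrite {2}(splitr t) opprD addrA subrr add0r.
  by rewrite normrN ger0_norm ?divr_ge0 //; lra.
- rewrite -prE //.
  under eq_integral do rewrite adv_loss_true //.
  by rewrite integral_indic // setIT.
Qed.

Lemma int_false (m : R) (A : set R) : measurable (Sset A eps) ->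
  (\int[normal_prob m sigma]_x adv_loss A eps x false = normal_prob m sigma (Sset A eps))%E.
Proof.
move=> mS.
rewrite (_ : (fun x => adv_loss A eps x false) = fun x => (\1_(Sset A eps) x)%:E); last first.
  by apply/funext => x; rewrite adv_loss_false.
by rewrite integral_indic // setIT.
Qed.

Lemma int_true (m : R) (A : set R) : measurable (Tset A eps) ->
  (\int[normal_prob m sigma]_x adv_loss A eps x true = normal_prob m sigma (Tset A eps))%E.
Proof.
move=> mS.
rewrite (_ : (fun x => adv_loss A eps x true) = fun x => (\1_(Tset A eps) x)%:E); last first.
  by apply/funext => x; rewrite adv_loss_true.
by rewrite integral_indic // setIT.
Qed.

Lemma risk_set0 : adv_risk mu0 mu1 sigma eps set0 = (1/2)%:E.
Proof.
have S0 : Sset set0 eps = set0.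
  by apply/seteqP; split => x /=; [case=> x' [_ []] | case].
have T0 : Tset set0 eps = setT.
  by apply/seteqP; split => x // _; exists x; split => //; rewrite subrr normr0.
rewrite /adv_risk int_false ?int_true ?S0 ?T0 // measure0 probability_setT.
by rewrite mule0 add0e mule1.
Qed.

Lemma risk_H (c : R) : adv_risk mu0 mu1 sigma eps [set x | c <= x] =
  ((1/2)%:E * normal_prob mu0 sigma `[(c - eps)%R, +oo[ +
   (1/2)%:E * normal_prob mu1 sigma `]-oo, (c + eps)%R[)%E.
Proof.
have SH : Sset [set x | c <= x] eps = `[c - eps, +oo[%classic.
  apply/seteqP; split => x /=; rewrite in_itv /= andbT.
    move=> [x' [h1 h2]]; move: h1; rewrite ler_norml => /andP[h1 h3]; move: h2 => /= h2; lra.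
  move=> h; exists (x + eps); split; last by rewrite /=; lra.
  by rewrite addrC addKr ger0_norm.
have TH : Tset [set x | c <= x] eps = `]-oo, c + eps[%classic.
  apply/seteqP; split => x /=; rewrite in_itv /=.
    move=> [x' [h1 h2]]; move: h1; rewrite ler_norml => /andP[h1 h3].
    move: h2 => /= /negP; rewrite -ltNge => h2; lra.
  move=> h; exists (x - eps); split; last by rewrite /=; apply/negP; rewrite -ltNge; lra.
  by rewrite addrC addKr normrN ger0_norm.
by rewrite /adv_risk int_false ?int_true ?SH ?TH.
Qed.

Lemma main3 (hmu : mu0 < mu1) :
  (`|mu0 - mu1| / 2 <= eps ->
     opt_risk mu0 mu1 sigma eps = (1/2)%:E /\
     exists c : bool,
       adv_risk mu0 mu1 sigma eps (if c then setT else set0)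
         = opt_risk mu0 mu1 sigma eps) /\
  (eps < `|mu0 - mu1| / 2 ->
     adv_risk mu0 mu1 sigma eps [set x | (mu0 + mu1) / 2 <= x]
       = opt_risk mu0 mu1 sigma eps /\
     opt_risk mu0 mu1 sigma eps = (Qfun (((mu1 - mu0) / 2 - eps) / sigma))%:E).
Proof.
have hd : `|mu0 - mu1| = mu1 - mu0 by rewrite distrC gtr0_norm // subr_gt0.
rewrite hd; split => he.
- have v : opt_risk mu0 mu1 sigma eps = (1/2)%:E.
    apply: (opt_eq closed0 risk_set0) => A cA.
    have := risk_lb cA (t := mu1 - mu0) _ _.
    rewrite (addrC mu0) subrK; move=> /(_ _ _) h.
    apply: le_trans (h _ _); last 2 first.
    + by rewrite subr_ge0 ltW.
    + lra.
    have mT : measurable (Tset A eps) by apply: open_measurable; exact: Tset_open.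
    have : normal_prob mu1 sigma (~` Tset A eps) = (1 - normal_prob mu1 sigma (Tset A eps))%E.
      exact: probability_setC.
    rewrite !prE //; last exact: measurableC.
    rewrite -EFinB => -[->]; rewrite lee_fin; lra.
  by split => //; exists false; rewrite v risk_set0.
- set d := (mu1 - mu0) / 2 - eps.
  have d0 : 0 < d by rewrite /d; lra.
  have rH : adv_risk mu0 mu1 sigma eps [set x | (mu0 + mu1) / 2 <= x] = (Qfun (d / sigma))%:E.
    rewrite risk_H.
    have -> : (mu0 + mu1) / 2 - eps = mu0 + d by rewrite /d; field.
    have -> : (mu0 + mu1) / 2 + eps = mu1 - d by rewrite /d; field.
    by rewrite T1 // T4 // -!EFinM -EFinD -mulrDl -splitr mul1r.
  have v : opt_risk mu0 mu1 sigma eps = (Qfun (d / sigma))%:E.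
    apply: (opt_eq _ rH); first exact: closed_ge.
    move=> A cA.
    have mT : measurable (Tset A eps) by apply: open_measurable; exact: Tset_open.
    have h := risk_lb cA (t := 2 * eps) _ _.
    apply: le_trans (h _ _); last 2 first.
    + by rewrite mulr_ge0.
    + by [].
    have hb := bayes (a := mu0 + 2 * eps) (b := mu1) (s := sigma) _ s0 (measurableC mT).
    rewrite setCK in hb.
    have E1 : pr (mu0 + 2 * eps) sigma `](mu0 + 2 * eps + mu1) / 2, +oo[ = Qfun (d / sigma).
      have -> : (mu0 + 2 * eps + mu1) / 2 = (mu0 + 2 * eps) + d by rewrite /d; field.
      by rewrite /pr T2.
    have E2 : pr mu1 sigma (~` `](mu0 + 2 * eps + mu1) / 2, +oo[) = Qfun (d / sigma).
      rewrite setCitvr.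
      have -> : (mu0 + 2 * eps + mu1) / 2 = mu1 - d by rewrite /d; field.
      by rewrite /pr T3.
    have : mu0 + 2 * eps <= mu1 by lra.
    move=> /hb; rewrite E1 E2 => hh.
    rewrite lee_fin; lra.
  by rewrite v rH.
Qed.
End M.

Theorem theorem3 (R : realType) (mu0 mu1 sigma eps : R)
  (hsigma : 0 < sigma) (hmu : mu0 < mu1) (heps : 0 <= eps) :
  (`|mu0 - mu1| / 2 <= eps ->
     opt_risk mu0 mu1 sigma eps = (1/2)%:E /\
     exists c : bool,
       adv_risk mu0 mu1 sigma eps (if c then setT else set0)
         = opt_risk mu0 mu1 sigma eps) /\
  (eps < `|mu0 - mu1| / 2 ->
     adv_risk mu0 mu1 sigma eps [set x | (mu0 + mu1) / 2 <= x]
       = opt_risk mu0 mu1 sigma eps /\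
     opt_risk mu0 mu1 sigma eps = (Qfun (((mu1 - mu0) / 2 - eps) / sigma))%:E).
Proof. exact: main3. Qed.
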